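(* Let $M$ be a matroid and let $M^{\mathrm{fin}}$ be its finitarization. Suppose $F$ is a base of $M^{\mathrm{fin}}$ and $B_1$, $B_2$ are bases of $M$ with $B_1\subseteq F$ and $B_2\subseteq F$. Then $|F\setminus B_1|=|F\setminus B_2|$, where all infinite cardinalities are regarded as equal.
   Context: A matroid $M=(E,\mathcal{L})$ consists of a (possibly infinite) set $E$ and a family $\mathcal{L}\subseteq 2^E$ of independent sets such that: (I1) $\emptyset\in\mathcal{L}$; (I2) subsets of independent sets are independent; (I3) if $B$ is a maximal element of $\mathcal{L}$ and $A\in\mathcal{L}$ is not maximal, there is $b\in B\setminus A$ with $A\cup\{b\}\in\mathcal{L}$; (I4) if $A\in\mathcal{L}$ and $A\subseteq X\subseteq E$, then $\{S\in\mathcal{L}: A\subseteq S\subseteq X\}$ has a maximal element (w.r.t. inclusion). Bases are the maximal independent sets. The finitarization of $M$ is $M^{\mathrm{fin}}=(E,\mathcal{L}^{\mathrm{fin}})$, where $\mathcal{L}^{\mathrm{fin}}$ consists of all $S\subseteq E$ every finite subset of which lies in $\mathcal{L}$; $M^{\mathrm{fin}}$ is a matroid. Convention: in comparing cardinalities, all infinite cardinalities are treated as a single value $\infty$. *)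

(* Defs.v *)
From Stdlib Require Import List.
Import ListNotations.

Definition subset {E : Type} (A B : E -> Prop) : Prop := forall x, A x -> B x.
Definition setD {E : Type} (A B : E -> Prop) : E -> Prop := fun x => A x /\ ~ B x.
Definition setU1 {E : Type} (A : E -> Prop) (b : E) : E -> Prop := fun x => A x \/ x = b.

Definition maximal_in {E : Type} (P : (E -> Prop) -> Prop) (S : E -> Prop) : Prop :=
  P S /\ forall T, P T -> subset S T -> subset T S.

Definition finite_set {E : Type} (A : E -> Prop) : Prop :=
  exists l : list E, forall x, A x <-> In x l.

Definition has_card {E : Type} (A : E -> Prop) (n : nat) : Prop :=
  exists l : list E, NoDup l /\ length l = n /\ forall x, A x <-> In x l.

Definition card_eq_oo {E : Type} (A B : E -> Prop) : Prop :=
  (exists n, has_card A n /\ has_card B n) \/ (~ finite_set A /\ ~ finite_set B).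

Record is_matroid {E : Type} (L : (E -> Prop) -> Prop) : Prop := {
  I1 : L (fun _ => False);
  I2 : forall A B, L B -> subset A B -> L A;
  I3 : forall A B, maximal_in L B -> L A -> ~ maximal_in L A ->
         exists b, B b /\ ~ A b /\ L (setU1 A b);
  I4 : forall A X, L A -> subset A X ->
         exists S, maximal_in (fun S => L S /\ subset A S /\ subset S X) S
}.

Definition is_base {E : Type} (L : (E -> Prop) -> Prop) (B : E -> Prop) : Prop :=
  maximal_in L B.

Definition fin_indep {E : Type} (L : (E -> Prop) -> Prop) (S : E -> Prop) : Prop :=
  forall T, subset T S -> finite_set T -> L T.

(* Main.v *)
Require Import Defs.
From Stdlib Require Import List Classical.
Import ListNotations.

Lemma hc_ext {E : Type} (A A' : E -> Prop) n :
  (forall x, A x <-> A' x) -> has_card A n -> has_card A' n.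
Proof.
  intros H [l [H1 [H2 H3]]]; exists l; split; [|split]; auto.
  intro x; rewrite <- H; auto.
Qed.

Lemma hc_zero {E : Type} (A : E -> Prop) x : has_card A 0 -> ~ A x.
Proof.
  intros [l [_ [H2 H3]]] Hx. destruct l; [|discriminate].
  apply H3 in Hx; destruct Hx.
Qed.

Lemma hc_remove {E : Type} (A : E -> Prop) n b :
  has_card A (S n) -> A b -> has_card (fun x => A x /\ x <> b) n.
Proof.
  intros [l [H1 [H2 H3]]] Hb.
  pose proof (proj1 (H3 b) Hb) as Hin.
  destruct (in_split _ _ Hin) as [l1 [l2 ->]].
  exists (l1 ++ l2). split; [|split].
  - eapply NoDup_remove_1; eauto.
  - rewrite length_app in *; simpl in H2; rewrite <- plus_n_Sm in H2; congruence.
  - intro x; split.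
    + intros [Hx Hne]. apply H3 in Hx. apply in_app_or in Hx. apply in_or_app.
      destruct Hx as [Hx|[Hx|Hx]]; auto. congruence.
    + intros Hx. split.
      * apply H3. apply in_or_app. apply in_app_or in Hx. simpl. tauto.
      * intros ->. eapply NoDup_remove_2; eauto.
Qed.

Lemma hc_add {E : Type} (A : E -> Prop) n x :
  has_card A n -> ~ A x -> has_card (fun y => A y \/ y = x) (S n).
Proof.
  intros [l [H1 [H2 H3]]] Hx. exists (x :: l). split; [|split].
  - constructor; auto. rewrite <- H3; auto.
  - simpl; congruence.
  - intro y; simpl; rewrite H3; split; intros [H|H]; auto.
Qed.

Lemma fin_hc {E : Type} (l : list E) : forall (A : E -> Prop),
  (forall x, A x <-> In x l) -> exists n, has_card A n.
Proof.
  induction l as [|a l IH]; intros A HA.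
  - exists 0, []. repeat split; auto. constructor. apply HA. intro H; destruct H.
  - destruct (IH (fun x => In x l)) as [n [l' [H1 [H2 H3]]]]; [tauto|].
    destruct (classic (In a l')) as [Ha|Ha].
    + exists n, l'. repeat split; auto.
      * intro H. apply HA in H. destruct H as [<-|H]; auto. apply H3; auto.
      * intro H. apply HA. right. apply H3; auto.
    + exists (S n), (a :: l'). repeat split.
      * constructor; auto.
      * simpl; congruence.
      * intro H. apply HA in H. destruct H as [<-|H]; simpl; auto. right; apply H3; auto.
      * intro H. apply HA. destruct H as [<-|H]; simpl; auto. right. apply H3; auto.
Qed.

Lemma hc_fin {E : Type} (A : E -> Prop) n : has_card A n -> finite_set A.
Proof. intros [l [_ [_ H]]]; exists l; auto. Qed.

Section M.
Context {E : Type} (L : (E -> Prop) -> Prop) (HM : is_matroid L).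

Lemma exch B1 B2 x : is_base L B1 -> is_base L B2 -> B1 x -> ~ B2 x ->
  exists b, B2 b /\ ~ B1 b /\ is_base L (fun y => (B1 y /\ y <> x) \/ y = b).
Proof.
  intros HB1 HB2 Hx Hnx.
  set (A := fun y => B1 y /\ y <> x).
  assert (LA : L A) by (apply (I2 _ HM A B1); [apply HB1| intros y [? ?]; auto]).
  assert (NA : ~ maximal_in L A).
  { intros [_ H]. assert (Hs := H B1 (proj1 HB1) (fun y h => proj1 h) x Hx).
    destruct Hs as [_ Hs]; auto. }
  destruct (I3 _ HM A B2 HB2 LA NA) as [b [Hb2 [Hba Hl]]].
  assert (Hb1 : ~ B1 b).
  { intro Hb. apply Hba. split; auto. intros ->. auto. }
  exists b; split; [auto|split; [auto|]].
  split; [exact Hl|].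
  intros T HT Hsub.
  destruct (classic (maximal_in L (setU1 A b))) as [Hm|Hm].
  - apply (proj2 Hm); auto.
  - exfalso.
    destruct (I3 _ HM _ B1 HB1 Hl Hm) as [c [Hc1 [Hc Hlc]]].
    assert (Hcx : c = x).
    { apply NNPP; intro Hne. apply Hc. left. split; auto. }
    subst c.
    assert (L (setU1 B1 b)).
    { apply (I2 _ HM _ _ Hlc). intros y [Hy|Hy].
      - destruct (classic (y = x)) as [->|Hne]; [right; auto|left; left; split; auto].
      - left; right; auto. }
    assert (Hs := proj2 HB1 _ H (fun y h => or_introl h) b (or_intror eq_refl)).
    auto.
Qed.

Lemma key n : forall B1 B2 C, is_base L B1 -> is_base L B2 ->
  (forall y, C y -> ~ B1 y /\ ~ B2 y) ->
  has_card (fun y => C y \/ (B2 y /\ ~ B1 y)) n ->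
  has_card (fun y => C y \/ (B1 y /\ ~ B2 y)) n.
Proof.
  induction n as [|m IH]; intros B1 B2 C HB1 HB2 HC Hn;
  (destruct (classic (exists x, B1 x /\ ~ B2 x)) as [[x [Hx1 Hx2]]|Hno];
   [|assert (S12 : subset B1 B2) by (intros y Hy; apply NNPP; intro; apply Hno; eauto);
     assert (S21 : subset B2 B1) by (apply (proj2 HB1); [apply HB2|exact S12]);
     revert Hn; apply hc_ext; intro y; split; intros [H|[H1 H2]]; auto;
       exfalso; auto]).
  - destruct (exch B1 B2 x HB1 HB2 Hx1 Hx2) as [b [Hb2 [Hb1 _]]].
    exfalso. apply (hc_zero _ b Hn). simpl. auto.
  - destruct (exch B1 B2 x HB1 HB2 Hx1 Hx2) as [b [Hb2 [Hb1 HB1']]].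
    set (B1' := fun y => (B1 y /\ y <> x) \/ y = b) in *.
    assert (H1 : has_card (fun y => C y \/ (B2 y /\ ~ B1' y)) m).
    { apply (hc_remove (fun y => C y \/ (B2 y /\ ~ B1 y)) m b) in Hn; [|right; auto].
      revert Hn; apply hc_ext; intro y; unfold B1'; split.
      - intros [[H|[H1 H2]] Hne]; auto. right; split; auto. intros [[? ?]|?]; auto.
      - intros [H|[H1 H2]].
        + split; auto. intros ->. apply HC in H. tauto.
        + split.
          * right; split; auto. intro Hy. destruct (classic (y = x)) as [->|Hne]; auto.
          * intros ->. auto. }
    assert (HC' : forall y, C y -> ~ B1' y /\ ~ B2 y).
    { intros y Hy. destruct (HC y Hy) as [Ha Hb]. split; auto.
      unfold B1'; intros [[? ?]| ->]; auto. }
    specialize (IH B1' B2 C HB1' HB2 HC' H1).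
    apply (hc_add (fun y => C y \/ (B1' y /\ ~ B2 y)) m x) in IH.
    + revert IH; apply hc_ext; intro y; unfold B1'; split.
      * intros [[H|[[[K1 K3]| ->] K2]]| ->]; auto; tauto.
      * intros [H|[K1 K2]]; auto.
        destruct (classic (y = x)) as [->|Hne]; auto; tauto.
    + unfold B1'; intros [H|[[[? ?]| ->] ?]]; auto.
      apply HC in H; tauto.
Qed.

End M.

Theorem theorem3p1p2 (E : Type) (L : (E -> Prop) -> Prop) (HM : is_matroid L)
  (F B1 B2 : E -> Prop) :
  is_base (fin_indep L) F ->
  is_base L B1 -> is_base L B2 ->
  subset B1 F -> subset B2 F ->
  card_eq_oo (setD F B1) (setD F B2).
Proof.
  intros _ HB1 HB2 S1 S2.
  set (C := fun y => F y /\ ~ B1 y /\ ~ B2 y).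
  assert (HC : forall y, C y -> ~ B1 y /\ ~ B2 y) by (unfold C; tauto).
  assert (HC' : forall y, C y -> ~ B2 y /\ ~ B1 y) by (unfold C; tauto).
  assert (E1 : forall y, setD F B1 y <-> C y \/ (B2 y /\ ~ B1 y)).
  { intro y; unfold setD, C; split.
    - intros [Hf Hb]. destruct (classic (B2 y)); tauto.
    - intros [H|[H H']]; [tauto|split; auto]. }
  assert (E2 : forall y, setD F B2 y <-> C y \/ (B1 y /\ ~ B2 y)).
  { intro y; unfold setD, C; split.
    - intros [Hf Hb]. destruct (classic (B1 y)); tauto.
    - intros [H|[H H']]; [tauto|split; auto]. }
  assert (T12 : forall n, has_card (setD F B1) n -> has_card (setD F B2) n).
  { intros n H. apply (hc_ext _ _ _ E1) in H.
    apply (key L HM n B1 B2 C HB1 HB2 HC) in H.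
    revert H; apply hc_ext; intro y; rewrite E2; tauto. }
  assert (T21 : forall n, has_card (setD F B2) n -> has_card (setD F B1) n).
  { intros n H. apply (hc_ext _ _ _ E2) in H.
    apply (key L HM n B2 B1 C HB2 HB1 HC') in H.
    revert H; apply hc_ext; intro y; rewrite E1; tauto. }
  destruct (classic (finite_set (setD F B1))) as [[l Hl]|Hnf].
  - destruct (fin_hc l _ Hl) as [n Hn]. left. exists n; auto.
  - right. split; auto. intros [l Hl]. destruct (fin_hc l _ Hl) as [n Hn].
    apply Hnf. eapply hc_fin; eauto.
Qed.
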